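(* Let $T>0$ and let $(S(s,t,\cdot))_{0\le s\le t\le T}$ be a family of maps from $\bar\Gamma$ into itself such that: (1) (translation invariance) $S(s,t,f+c)=S(s,t,f)+c$ for all $f\in\bar\Gamma$, $c\in\mathbb{R}$, $s\le t$; (2) (monotonicity) $f\le g$ implies $S(s,t,f)\le S(s,t,g)$ for all $s\le t$, $f,g\in\bar\Gamma$; (3) (locality) there is $\alpha>1$ such that for all $f,g\in\bar\Gamma$, $s\le t$, $x\in\mathbb{R}^2$, $R\ge0$: $\sup_{z\in\mathcal{B}(x,R)}|S(s,t,f)(z)-S(s,t,g)(z)|\le\sup_{z\in\mathcal{B}(x,R+\alpha(t-s))}|f(z)-g(z)|$, where $\mathcal{B}(x,r)$ is the closed ball of center $x$ and radius $r$ for the supremum norm on $\mathbb{R}^2$; (4) (semi-group) $S(r,t,f)=S(s,t,S(r,s,f))$ for all $r\le s\le t$ and $S(t,t,f)=f$, for all $f\in\bar\Gamma$; (5) (compatibility with linear solutions) for every $\rho\in\mathbb{R}\times[-1,0]$, with $f_\rho(x)=\rho\cdot x$, and all $s\le t$, $S(s,t,f_\rho)=f_\rho+v(\rho)(t-s)$. Then for any $f\in\bar\Gamma$, if $(x,t)\mapsto S(0,t,f)(x)$ is continuous on $\mathbb{R}^2\times[0,T]$, it is a viscosity solution of $\partial_t u=v(\nabla u)$, $u(\cdot,0)=f$, on $\mathbb{R}^2\times[0,T]$.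
   Context: $\bar\Gamma$ is the set of continuous $f:\mathbb{R}^2\to\mathbb{R}$ with $f(x,y_2)-f(x,y_1)\in[-(y_2-y_1),0]$ for all $x\in\mathbb{R}$ and $y_1\le y_2$. $v(\rho_1,\rho_2)=\frac1\pi\sqrt{\pi^2\rho_1^2+4\sin^2(\pi\rho_2)}$. A viscosity solution of $\partial_tu=v(\nabla u)$, $u(\cdot,0)=f$ on $\mathbb{R}^2\times[0,T]$ is a continuous $u$ with $u(\cdot,0)=f$ such that for every $\phi\in C^\infty(\mathbb{R}^2\times(0,T))$ and $(x_0,t_0)\in\mathbb{R}^2\times(0,T)$ with $\phi(x_0,t_0)=u(x_0,t_0)$: if $\phi\ge u$ on a neighbourhood of $(x_0,t_0)$ then $\partial_t\phi(x_0,t_0)\le v(\nabla\phi(x_0,t_0))$ (subsolution), and if $\phi\le u$ on a neighbourhood of $(x_0,t_0)$ then $\partial_t\phi(x_0,t_0)\ge v(\nabla\phi(x_0,t_0))$ (supersolution). *)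

(* Defs.v *)
From Stdlib Require Import Reals Lra.
From Coquelicot Require Import Coquelicot.
Open Scope R_scope.

Definition dinf (x z : R * R) : R :=
  Rmax (Rabs (fst z - fst x)) (Rabs (snd z - snd x)).

Definition ballinf (x : R * R) (r : R) (z : R * R) : Prop := dinf x z <= r.

Definition Gamma_bar (f : R * R -> R) : Prop :=
  (forall p : R * R, continuous f p) /\
  (forall x y1 y2 : R, y1 <= y2 ->
     - (y2 - y1) <= f (x, y2) - f (x, y1) <= 0).

Definition vel (rho : R * R) : R :=
  / PI * sqrt (PI ^ 2 * (fst rho) ^ 2 + 4 * (sin (PI * snd rho)) ^ 2).

Definition flin (rho : R * R) (x : R * R) : R :=
  fst rho * fst x + snd rho * snd x.

Definition open_dom (T : R) (x : R * R) (t : R) : Prop := 0 < t < T.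
Definition closed_dom (T : R) (x : R * R) (t : R) : Prop := 0 <= t <= T.

Definition cont_on (D : R * R -> R -> Prop) (u : R * R -> R -> R) : Prop :=
  forall x t, D x t -> forall eps, 0 < eps -> exists delta, 0 < delta /\
    forall y s, D y s -> dinf x y < delta -> Rabs (s - t) < delta ->
      Rabs (u y s - u x t) < eps.

Definition d_x1 (g : R * R -> R -> R) : R * R -> R -> R :=
  fun x t => Derive (fun y => g (y, snd x) t) (fst x).
Definition d_x2 (g : R * R -> R -> R) : R * R -> R -> R :=
  fun x t => Derive (fun y => g (fst x, y) t) (snd x).
Definition d_t (g : R * R -> R -> R) : R * R -> R -> R :=
  fun x t => Derive (fun s => g x s) t.

Definition cont_at (g : R * R -> R -> R) (x : R * R) (t : R) : Prop :=
  continuous (fun p : (R * R) * R => g (fst p) (snd p)) (x, t).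

Fixpoint Ck (k : nat) (U : R * R -> R -> Prop) (g : R * R -> R -> R) : Prop :=
  match k with
  | O => forall x t, U x t -> cont_at g x t
  | S k' =>
      (forall x t, U x t -> cont_at g x t) /\
      (forall x t, U x t ->
         ex_derive (fun y => g (y, snd x) t) (fst x) /\
         ex_derive (fun y => g (fst x, y) t) (snd x) /\
         ex_derive (fun s => g x s) t) /\
      Ck k' U (d_x1 g) /\ Ck k' U (d_x2 g) /\ Ck k' U (d_t g)
  end.

Definition Cinf (U : R * R -> R -> Prop) (g : R * R -> R -> R) : Prop :=
  forall k, Ck k U g.

Definition viscosity_solution (T : R) (f : R * R -> R) (u : R * R -> R -> R) : Prop :=
  cont_on (closed_dom T) u /\
  (forall x, u x 0 = f x) /\
  (forall (phi : R * R -> R -> R) (x0 : R * R) (t0 : R),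
     Cinf (open_dom T) phi -> open_dom T x0 t0 -> phi x0 t0 = u x0 t0 ->
     ((exists delta, 0 < delta /\ forall y s, open_dom T y s ->
         dinf x0 y < delta -> Rabs (s - t0) < delta -> u y s <= phi y s) ->
      d_t phi x0 t0 <= vel (d_x1 phi x0 t0, d_x2 phi x0 t0)) /\
     ((exists delta, 0 < delta /\ forall y s, open_dom T y s ->
         dinf x0 y < delta -> Rabs (s - t0) < delta -> phi y s <= u y s) ->
      vel (d_x1 phi x0 t0, d_x2 phi x0 t0) <= d_t phi x0 t0)).

(* Main.v *)
Require Import Defs.
From Stdlib Require Import Reals Lra.
From Coquelicot Require Import Coquelicot.
Open Scope R_scope.
Lemma cont3 (G : (R*R)*R -> R) x t : continuous G (x,t) -> forall eps, 0 < eps -> exists d, 0 < d /\ forall y s,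
  Rabs (fst y - fst x) < d -> Rabs (snd y - snd x) < d -> Rabs (s - t) < d -> Rabs (G (y,s) - G (x,t)) < eps.
Proof. intros H eps He.
  destruct (proj1 (filterlim_locally G (G (x,t))) H (mkposreal eps He)) as [d Hd].
  exists d. split. apply cond_pos. intros y s h1 h2 h3. apply (Hd (y,s)).
  split; [split|]; assumption.
Qed.
Lemma minmax_abs a b c : Rmin a b <= c <= Rmax a b -> Rabs (c - a) <= Rabs (b - a).
Proof. unfold Rmin, Rmax; destruct (Rle_dec a b); intros; split_Rabs; lra. Qed.
Lemma mvt_bound (g dg : R -> R) a b k eta :
  (forall c, Rmin a b <= c <= Rmax a b -> is_derive g c (dg c)) ->
  (forall c, Rmin a b <= c <= Rmax a b -> Rabs (dg c - k) <= eta) ->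
  Rabs (g b - g a - k * (b - a)) <= eta * Rabs (b - a).
Proof. intros Hd Hb.
  destruct (MVT_gen g a b dg) as [c [Hc Heq]].
  - intros x Hx. apply Hd. lra.
  - intros x Hx. apply continuity_pt_filterlim. apply (ex_derive_continuous (K:=R_AbsRing) (V:=R_NormedModule)). eexists. apply Hd. exact Hx.
  - rewrite Heq. replace (dg c * (b - a) - k * (b - a)) with ((dg c - k) * (b - a)) by ring.
    rewrite Rabs_mult. apply Rmult_le_compat_r. apply Rabs_pos. apply Hb. exact Hc.
Qed.
Lemma ballR (x y e : R) : ball x e y <-> Rabs (y - x) < e.
Proof. reflexivity. Qed.
Lemma ballP (x y : R*R) e : ball x e y <-> ball (fst x) e (fst y) /\ ball (snd x) e (snd y).
Proof. destruct x, y; reflexivity. Qed.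
Lemma cont_eps (g : R*R -> R) p : continuous g p -> forall eps, 0 < eps -> exists d, 0 < d /\ forall q,
  Rabs (fst q - fst p) < d -> Rabs (snd q - snd p) < d -> Rabs (g q - g p) < eps.
Proof. intros H eps He.
  destruct (proj1 (filterlim_locally g (g p)) H (mkposreal eps He)) as [d Hd].
  exists d. split. apply cond_pos. intros q h1 h2. apply (Hd q). apply ballP; split; apply ballR; auto.
Qed.
Lemma cont_max (f g : R*R -> R) p : continuous f p -> continuous g p -> continuous (fun q => Rmax (f q) (g q)) p.
Proof. intros Hf Hg. apply filterlim_locally. intro eps.
  generalize (proj1 (filterlim_locally f (f p)) Hf eps) (proj1 (filterlim_locally g (g p)) Hg eps).
  intros A B. generalize (filter_and _ _ A B). apply filter_imp. intros q [h1 h2].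
  apply ballR.
  assert (k1 : Rabs (f q - f p) < eps) by exact h1.
  assert (k2 : Rabs (g q - g p) < eps) by exact h2.
  clear h1 h2. unfold Rmax.
  destruct (Rle_dec (f q) (g q)); destruct (Rle_dec (f p) (g p)); apply Rabs_def1;
   apply Rabs_def2 in k1; apply Rabs_def2 in k2; lra.
Qed.
Lemma cont_min (f g : R*R -> R) p : continuous f p -> continuous g p -> continuous (fun q => Rmin (f q) (g q)) p.
Proof. intros Hf Hg. apply filterlim_locally. intro eps.
  generalize (proj1 (filterlim_locally f (f p)) Hf eps) (proj1 (filterlim_locally g (g p)) Hg eps).
  intros A B. generalize (filter_and _ _ A B). apply filter_imp. intros q [h1 h2].
  apply ballR.
  assert (k1 : Rabs (f q - f p) < eps) by exact h1.
  assert (k2 : Rabs (g q - g p) < eps) by exact h2.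
  clear h1 h2. unfold Rmin.
  destruct (Rle_dec (f q) (g q)); destruct (Rle_dec (f p) (g p)); apply Rabs_def1;
   apply Rabs_def2 in k1; apply Rabs_def2 in k2; lra.
Qed.
Lemma expand (T : R) phi x01 x02 t0 : Cinf (open_dom T) phi -> 0 < t0 < T ->
  forall eta, 0 < eta -> exists rho, 0 < rho /\ forall z1 z2 t,
   Rabs (z1 - x01) < rho -> Rabs (z2 - x02) < rho -> Rabs (t - t0) < rho ->
   Rabs (phi (z1,z2) t - phi (x01,x02) t0 - d_x1 phi (x01,x02) t0 * (z1 - x01)
         - d_x2 phi (x01,x02) t0 * (z2 - x02) - d_t phi (x01,x02) t0 * (t - t0))
   <= eta * (Rabs (z1 - x01) + Rabs (z2 - x02) + Rabs (t - t0)).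
Proof.
  intros Hphi Ht eta He.
  destruct (Hphi 1%nat) as [_ [Hder [H1 [H2 H3]]]].
  destruct (cont3 _ _ _ (H1 (x01,x02) t0 Ht) eta He) as [d1 [Hd1 K1]].
  destruct (cont3 _ _ _ (H2 (x01,x02) t0 Ht) eta He) as [d2 [Hd2 K2]].
  destruct (cont3 _ _ _ (H3 (x01,x02) t0 Ht) eta He) as [d3 [Hd3 K3]].
  exists (Rmin (Rmin d1 d2) (Rmin d3 (Rmin t0 (T - t0)))).
  split. { repeat apply Rmin_pos; lra. }
  intros z1 z2 t hz1 hz2 ht.
  assert (m1 := Rmin_l (Rmin d1 d2) (Rmin d3 (Rmin t0 (T - t0)))).
  assert (m2 := Rmin_r (Rmin d1 d2) (Rmin d3 (Rmin t0 (T - t0)))).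
  assert (m3 := Rmin_l d1 d2). assert (m4 := Rmin_r d1 d2).
  assert (m5 := Rmin_l d3 (Rmin t0 (T - t0))). assert (m6 := Rmin_r d3 (Rmin t0 (T - t0))).
  assert (m7 := Rmin_l t0 (T - t0)). assert (m8 := Rmin_r t0 (T - t0)).
  set (rho := Rmin (Rmin d1 d2) (Rmin d3 (Rmin t0 (T - t0)))) in *.
  assert (E1 : Rabs (phi (z1,z2) t - phi (z1,z2) t0 - d_t phi (x01,x02) t0 * (t - t0)) <= eta * Rabs (t - t0)).
  { apply (mvt_bound (fun s => phi (z1,z2) s) (fun s => d_t phi (z1,z2) s)).
    - intros c Hc. apply minmax_abs in Hc.
      assert (Hcd : 0 < c < T) by (split_Rabs; lra).
      destruct (Hder (z1,z2) c Hcd) as [_ [_ D]]. apply Derive_correct. exact D.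
    - intros c Hc. apply minmax_abs in Hc. left.
      apply (K3 (z1,z2) c); simpl; lra. }
  assert (E2 : Rabs (phi (z1,z2) t0 - phi (z1,x02) t0 - d_x2 phi (x01,x02) t0 * (z2 - x02)) <= eta * Rabs (z2 - x02)).
  { apply (mvt_bound (fun y => phi (z1,y) t0) (fun y => d_x2 phi (z1,y) t0)).
    - intros c Hc. destruct (Hder (z1,c) t0 Ht) as [_ [D _]]. apply Derive_correct. exact D.
    - intros c Hc. apply minmax_abs in Hc. left.
      apply (K2 (z1,c) t0); simpl; try lra. rewrite Rminus_eq_0, Rabs_R0. lra. }
  assert (E3 : Rabs (phi (z1,x02) t0 - phi (x01,x02) t0 - d_x1 phi (x01,x02) t0 * (z1 - x01)) <= eta * Rabs (z1 - x01)).
  { apply (mvt_bound (fun y => phi (y,x02) t0) (fun y => d_x1 phi (y,x02) t0)).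
    - intros c Hc. destruct (Hder (c,x02) t0 Ht) as [D _]. apply Derive_correct. exact D.
    - intros c Hc. apply minmax_abs in Hc. left.
      apply (K1 (c,x02) t0); simpl; try lra; rewrite Rminus_eq_0, Rabs_R0; lra. }
  set (A1 := phi (z1,z2) t - phi (z1,z2) t0 - d_t phi (x01,x02) t0 * (t - t0)) in *.
  set (A2 := phi (z1,z2) t0 - phi (z1,x02) t0 - d_x2 phi (x01,x02) t0 * (z2 - x02)) in *.
  set (A3 := phi (z1,x02) t0 - phi (x01,x02) t0 - d_x1 phi (x01,x02) t0 * (z1 - x01)) in *.
  match goal with |- Rabs ?e <= _ => replace e with (A1 + A2 + A3) by (unfold A1, A2, A3; ring) end.
  eapply Rle_trans. apply Rabs_triang. eapply Rle_trans. apply Rplus_le_compat_r. apply Rabs_triang.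
  lra.
Qed.
Lemma der_approx (g : R -> R) y d : is_derive g y d -> forall eps del, 0 < eps -> 0 < del ->
  (exists h, 0 < h < del /\ Rabs (g (y + h) - g y - d * h) <= eps * h) /\
  (exists h, 0 < h < del /\ Rabs (g (y - h) - g y + d * h) <= eps * h).
Proof.
  intros H eps del He Hdel. apply is_derive_Reals in H.
  destruct (H eps He) as [dl Hdl].
  assert (Hp : 0 < Rmin del dl) by (apply Rmin_pos; [lra | apply cond_pos]).
  assert (m1 := Rmin_l del dl). assert (m2 := Rmin_r del dl).
  set (h := Rmin del dl / 2).
  assert (Hh : 0 < h) by (unfold h; lra).
  split.
  - exists h. split. unfold h; lra.
    assert (K := Hdl h ltac:(lra) ltac:(rewrite Rabs_pos_eq; unfold h; lra)).
    replace (g (y + h) - g y - d * h) with (((g (y + h) - g y) / h - d) * h) by (field; lra).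
    rewrite Rabs_mult, (Rabs_pos_eq h) by lra. apply Rmult_le_compat_r; lra.
  - exists h. split. unfold h; lra.
    assert (K := Hdl (-h) ltac:(lra) ltac:(rewrite Rabs_Ropp, Rabs_pos_eq; unfold h; lra)).
    replace (y + - h) with (y - h) in K by ring.
    replace (g (y - h) - g y + d * h) with (- (((g (y - h) - g y) / (- h) - d) * h)) by (field; lra).
    rewrite Rabs_Ropp, Rabs_mult, (Rabs_pos_eq h) by lra. apply Rmult_le_compat_r; lra.
Qed.
Lemma derA (g : R -> R) y d m del : is_derive g y d -> 0 < del ->
  (forall h, 0 < h < del -> m * h <= g (y + h) - g y) -> m <= d.
Proof. intros H Hdel Hh. destruct (Rle_dec m d) as [|n]; auto. exfalso.
  destruct (der_approx g y d H ((m - d)/2) del ltac:(lra) Hdel) as [[h [h1 h2]] _].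
  specialize (Hh h h1). apply Rabs_le_between in h2. nra. Qed.
Lemma derB (g : R -> R) y d m del : is_derive g y d -> 0 < del ->
  (forall h, 0 < h < del -> g (y + h) - g y <= m * h) -> d <= m.
Proof. intros H Hdel Hh. destruct (Rle_dec d m) as [|n]; auto. exfalso.
  destruct (der_approx g y d H ((d - m)/2) del ltac:(lra) Hdel) as [[h [h1 h2]] _].
  specialize (Hh h h1). apply Rabs_le_between in h2. nra. Qed.
Lemma derC (g : R -> R) y d m del : is_derive g y d -> 0 < del ->
  (forall h, 0 < h < del -> - (m * h) <= g (y - h) - g y) -> d <= m.
Proof. intros H Hdel Hh. destruct (Rle_dec d m) as [|n]; auto. exfalso.
  destruct (der_approx g y d H ((d - m)/2) del ltac:(lra) Hdel) as [_ [h [h1 h2]]].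
  specialize (Hh h h1). apply Rabs_le_between in h2. nra. Qed.
Lemma derD (g : R -> R) y d m del : is_derive g y d -> 0 < del ->
  (forall h, 0 < h < del -> g (y - h) - g y <= - (m * h)) -> m <= d.
Proof. intros H Hdel Hh. destruct (Rle_dec m d) as [|n]; auto. exfalso.
  destruct (der_approx g y d H ((m - d)/2) del ltac:(lra) Hdel) as [_ [h [h1 h2]]].
  specialize (Hh h h1). apply Rabs_le_between in h2. nra. Qed.
Lemma flin_cont p q : continuous (flin p) q.
Proof. destruct q as [a b]. unfold flin.
apply (continuous_plus (fun y : R*R => fst p * fst y) (fun y => snd p * snd y)).
apply (continuous_mult (fun _ => fst p) (fun y : R*R => fst y)). apply continuous_const. apply continuous_fst.
apply (continuous_mult (fun _ => snd p) (fun y : R*R => snd y)). apply continuous_const. apply continuous_snd.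
Qed.
Lemma GB_flin p : -1 <= snd p <= 0 -> Gamma_bar (flin p).
Proof. intros Hp. split. apply flin_cont. intros x y1 y2 Hy. unfold flin; simpl.
  split; nra. Qed.
Lemma GB_flinc p c : -1 <= snd p <= 0 -> Gamma_bar (fun y => flin p y + c).
Proof. intros Hp. split.
  - intro q. apply (continuous_plus (flin p) (fun _ => c)). apply flin_cont. apply continuous_const.
  - intros x y1 y2 Hy. unfold flin; simpl. split; nra. Qed.
Lemma GB_max f g : Gamma_bar f -> Gamma_bar g -> Gamma_bar (fun y => Rmax (f y) (g y)).
Proof. intros [cf mf] [cg mg]. split.
  - intro q. apply cont_max; auto.
  - intros x y1 y2 Hy. specialize (mf x y1 y2 Hy). specialize (mg x y1 y2 Hy).
    unfold Rmax. destruct (Rle_dec (f (x,y2)) (g (x,y2))); destruct (Rle_dec (f (x,y1)) (g (x,y1))); lra.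
Qed.
Lemma GB_min f g : Gamma_bar f -> Gamma_bar g -> Gamma_bar (fun y => Rmin (f y) (g y)).
Proof. intros [cf mf] [cg mg]. split.
  - intro q. apply cont_min; auto.
  - intros x y1 y2 Hy. specialize (mf x y1 y2 Hy). specialize (mg x y1 y2 Hy).
    unfold Rmin. destruct (Rle_dec (f (x,y2)) (g (x,y2))); destruct (Rle_dec (f (x,y1)) (g (x,y1))); lra.
Qed.
Lemma dinf_lt x1 x2 z1 z2 d : Rabs (z1 - x1) < d -> Rabs (z2 - x2) < d -> dinf (x1,x2) (z1,z2) < d.
Proof. intros. unfold dinf; simpl. unfold Rmax. destruct Rle_dec; lra. Qed.
Lemma dinf_inv x1 x2 z1 z2 r : dinf (x1,x2) (z1,z2) <= r -> Rabs (z1 - x1) <= r /\ Rabs (z2 - x2) <= r.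
Proof. unfold dinf; simpl. intros H. split; eapply Rle_trans; [apply Rmax_l | exact H | apply Rmax_r | exact H]. Qed.

Theorem proposition3p5 (T : R)
  (S : R -> R -> (R * R -> R) -> (R * R -> R)) :
  0 < T ->
  (* S(s,t,.) maps Gamma-bar into itself *)
  (forall s t f, 0 <= s <= t -> t <= T -> Gamma_bar f -> Gamma_bar (S s t f)) ->
  (* (1) translation invariance *)
  (forall s t f c, 0 <= s <= t -> t <= T -> Gamma_bar f ->
     forall z, S s t (fun y => f y + c) z = S s t f z + c) ->
  (* (2) monotonicity *)
  (forall s t f g, 0 <= s <= t -> t <= T -> Gamma_bar f -> Gamma_bar g ->
     (forall z, f z <= g z) -> forall z, S s t f z <= S s t g z) ->
  (* (3) locality *)
  (exists alpha, 1 < alpha /\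
     forall f g s t x Rad, Gamma_bar f -> Gamma_bar g -> 0 <= s <= t -> t <= T ->
       0 <= Rad ->
       forall M,
         (forall z, ballinf x (Rad + alpha * (t - s)) z -> Rabs (f z - g z) <= M) ->
         (forall z, ballinf x Rad z -> Rabs (S s t f z - S s t g z) <= M)) ->
  (* (4) semi-group *)
  (forall r s t f, 0 <= r <= s -> s <= t <= T -> Gamma_bar f ->
     forall z, S r t f z = S s t (S r s f) z) ->
  (forall t f, 0 <= t <= T -> Gamma_bar f -> forall z, S t t f z = f z) ->
  (* (5) compatibility with linear solutions *)
  (forall rho s t, -1 <= snd rho <= 0 -> 0 <= s <= t -> t <= T ->
     forall z, S s t (flin rho) z = flin rho z + vel rho * (t - s)) ->
  forall f, Gamma_bar f ->
    cont_on (closed_dom T) (fun x t => S 0 t f x) ->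
    viscosity_solution T f (fun x t => S 0 t f x).
Proof.
  intros HT HG HTr HMon [alpha [Halpha HLoc]] HSg HId HLin f Hf Hcont.
  split; [exact Hcont|]. split.
  { intro x. apply HId; [lra|exact Hf]. }
  intros phi [x01 x02] t0 Hphi Hdom Heq. unfold open_dom in Hdom. simpl in Heq.
  destruct (Hphi 1%nat) as [_ [Hder _]].
  destruct (Hder (x01,x02) t0 Hdom) as [_ [Dx2 _]].
  assert (Hd2 := Derive_correct _ _ Dx2). simpl in Hd2.
  change (Derive (fun y => phi (x01, y) t0) x02) with (d_x2 phi (x01,x02) t0) in Hd2.
  set (a := d_t phi (x01,x02) t0) in *.
  set (p1 := d_x1 phi (x01,x02) t0) in *.
  set (p2 := d_x2 phi (x01,x02) t0) in *.
  destruct (HG 0 t0 f ltac:(lra) ltac:(lra) Hf) as [_ Hmono].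
  set (K := 2 * alpha + 1).
  assert (HK : 0 < K) by (unfold K; lra).
  assert (Hstep : forall rho d0, 0 < rho -> 0 < d0 -> exists h, 0 < h /\ h < rho /\ alpha * h < rho
            /\ h < d0 /\ alpha * h < d0 /\ h < t0).
  { intros rho d0 Hr Hd0.
    set (m := Rmin rho (Rmin d0 t0)).
    assert (Hm : 0 < m) by (unfold m; repeat apply Rmin_pos; lra).
    assert (m1 := Rmin_l rho (Rmin d0 t0)). assert (m2 := Rmin_r rho (Rmin d0 t0)).
    assert (m3 := Rmin_l d0 t0). assert (m4 := Rmin_r d0 t0).
    fold m in m1, m2.
    exists (m / (2 * alpha + 2)).
    assert (E : m / (2 * alpha + 2) * (2 * alpha + 2) = m) by (field; lra).
    assert (P : 0 < m / (2 * alpha + 2)) by (apply Rdiv_lt_0_compat; lra).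
    repeat split; nra. }
  split.
  -
    intros [d0 [Hd0 Htouch]].
    assert (Hp2 : -1 <= p2 <= 0).
    { split.
      - apply (derA _ _ _ _ d0 Hd2 Hd0). intros h Hh.
        assert (A := Htouch (x01, x02 + h) t0 Hdom
          ltac:(apply dinf_lt; [rewrite Rminus_eq_0, Rabs_R0 | replace (x02 + h - x02) with h by ring; rewrite Rabs_pos_eq]; lra)
          ltac:(rewrite Rminus_eq_0, Rabs_R0; lra)).
        assert (B := Hmono x01 x02 (x02 + h) ltac:(lra)). simpl in A. lra.
      - apply (derC _ _ _ _ d0 Hd2 Hd0). intros h Hh.
        assert (A := Htouch (x01, x02 - h) t0 Hdom
          ltac:(apply dinf_lt; [rewrite Rminus_eq_0, Rabs_R0 | replace (x02 - h - x02) with (- h) by ring; rewrite Rabs_Ropp, Rabs_pos_eq]; lra)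
          ltac:(rewrite Rminus_eq_0, Rabs_R0; lra)).
        assert (B := Hmono x01 (x02 - h) x02 ltac:(lra)). simpl in A. lra. }
    assert (Main : forall eta, 0 < eta -> a <= vel (p1,p2) + K * eta).
    { intros eta Heta.
      destruct (expand T phi x01 x02 t0 Hphi Hdom eta Heta) as [rho [Hrho Hexp]].
      destruct (Hstep rho d0 Hrho Hd0) as [h [h0 [h1 [h2 [h3 [h4 h5]]]]]].
      set (s := t0 - h).
      assert (Hs : 0 <= 0 <= s) by (unfold s; lra).
      assert (GU := HG 0 s f Hs ltac:(unfold s; lra) Hf).
      set (c := phi (x01,x02) t0 - flin (p1,p2) (x01,x02) - a * h + K * eta * h).
      set (L := fun y => flin (p1,p2) y + c).
      assert (GL : Gamma_bar L) by (apply GB_flinc; simpl; lra).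
      assert (HUL : forall z, ballinf (x01,x02) (0 + alpha * (t0 - s)) z -> S 0 s f z <= L z).
      { intros [z1 z2] Hz. unfold ballinf in Hz.
        replace (0 + alpha * (t0 - s)) with (alpha * h) in Hz by (unfold s; ring).
        apply dinf_inv in Hz. destruct Hz as [Hz1 Hz2].
        assert (A := Htouch (z1,z2) s ltac:(unfold open_dom, s; lra)
           ltac:(apply dinf_lt; lra)
           ltac:(unfold s; replace (t0 - h - t0) with (-h) by ring; rewrite Rabs_Ropp, Rabs_pos_eq; lra)).
        simpl in A.
        assert (B := Hexp z1 z2 s ltac:(lra) ltac:(lra)
           ltac:(unfold s; replace (t0 - h - t0) with (-h) by ring; rewrite Rabs_Ropp, Rabs_pos_eq; lra)).
        unfold s in B. replace (t0 - h - t0) with (-h) in B by ring.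
        rewrite Rabs_Ropp, (Rabs_pos_eq h) in B by lra.
        fold p1 p2 a in B.
        apply Rabs_le_between in B.
        assert (C : eta * (Rabs (z1 - x01) + Rabs (z2 - x02) + h) <= K * eta * h).
        { unfold K. nra. }
        unfold L, c, flin; simpl. unfold s in *. lra. }
      assert (E1 : S 0 t0 f (x01,x02) = S s t0 (S 0 s f) (x01,x02))
        by (apply HSg; [lra | unfold s; lra | exact Hf]).
      assert (E2 : S s t0 (S 0 s f) (x01,x02) <= S s t0 (fun y => Rmax (S 0 s f y) (L y)) (x01,x02)).
      { apply HMon; try (unfold s; lra); auto. apply GB_max; auto. intro z. apply Rmax_l. }
      assert (E3 : Rabs (S s t0 (fun y => Rmax (S 0 s f y) (L y)) (x01,x02) - S s t0 L (x01,x02)) <= 0).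
      { apply (HLoc _ _ s t0 (x01,x02) 0); try (unfold s; lra).
        - apply GB_max; auto.
        - exact GL.
        - intros z Hz. rewrite Rmax_right by (apply HUL; exact Hz).
          rewrite Rminus_eq_0, Rabs_R0; lra.
        - unfold ballinf, dinf. rewrite !Rminus_eq_0, Rabs_R0, Rmax_left; lra. }
      assert (E4 : S s t0 L (x01,x02) = S s t0 (flin (p1,p2)) (x01,x02) + c).
      { apply HTr; try (unfold s; lra). apply GB_flin; simpl; lra. }
      assert (E5 : S s t0 (flin (p1,p2)) (x01,x02) = flin (p1,p2) (x01,x02) + vel (p1,p2) * (t0 - s)).
      { apply HLin; simpl; unfold s; lra. }
      apply Rabs_le_between in E3.
      unfold s in E5. replace (t0 - (t0 - h)) with h in E5 by ring.
      assert (F : a * h <= (vel (p1,p2) + K * eta) * h) by (unfold c, s in *; lra).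
      apply Rmult_le_reg_r in F; lra. }
    destruct (Rle_dec a (vel (p1,p2))) as [|n]; auto. exfalso.
    assert (M := Main ((a - vel (p1,p2)) / (2 * K)) ltac:(apply Rdiv_lt_0_compat; lra)).
    replace (K * ((a - vel (p1, p2)) / (2 * K))) with ((a - vel (p1,p2)) / 2) in M by (field; lra).
    lra.
  -
    intros [d0 [Hd0 Htouch]].
    assert (Hp2 : -1 <= p2 <= 0).
    { split.
      - apply (derD _ _ _ _ d0 Hd2 Hd0). intros h Hh.
        assert (A := Htouch (x01, x02 - h) t0 Hdom
          ltac:(apply dinf_lt; [rewrite Rminus_eq_0, Rabs_R0 | replace (x02 - h - x02) with (- h) by ring; rewrite Rabs_Ropp, Rabs_pos_eq]; lra)
          ltac:(rewrite Rminus_eq_0, Rabs_R0; lra)).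
        assert (B := Hmono x01 (x02 - h) x02 ltac:(lra)). simpl in A. lra.
      - apply (derB _ _ _ _ d0 Hd2 Hd0). intros h Hh.
        assert (A := Htouch (x01, x02 + h) t0 Hdom
          ltac:(apply dinf_lt; [rewrite Rminus_eq_0, Rabs_R0 | replace (x02 + h - x02) with h by ring; rewrite Rabs_pos_eq]; lra)
          ltac:(rewrite Rminus_eq_0, Rabs_R0; lra)).
        assert (B := Hmono x01 x02 (x02 + h) ltac:(lra)). simpl in A. lra. }
    assert (Main : forall eta, 0 < eta -> vel (p1,p2) - K * eta <= a).
    { intros eta Heta.
      destruct (expand T phi x01 x02 t0 Hphi Hdom eta Heta) as [rho [Hrho Hexp]].
      destruct (Hstep rho d0 Hrho Hd0) as [h [h0 [h1 [h2 [h3 [h4 h5]]]]]].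
      set (s := t0 - h).
      assert (Hs : 0 <= 0 <= s) by (unfold s; lra).
      assert (GU := HG 0 s f Hs ltac:(unfold s; lra) Hf).
      set (c := phi (x01,x02) t0 - flin (p1,p2) (x01,x02) - a * h - K * eta * h).
      set (L := fun y => flin (p1,p2) y + c).
      assert (GL : Gamma_bar L) by (apply GB_flinc; simpl; lra).
      assert (HUL : forall z, ballinf (x01,x02) (0 + alpha * (t0 - s)) z -> L z <= S 0 s f z).
      { intros [z1 z2] Hz. unfold ballinf in Hz.
        replace (0 + alpha * (t0 - s)) with (alpha * h) in Hz by (unfold s; ring).
        apply dinf_inv in Hz. destruct Hz as [Hz1 Hz2].
        assert (A := Htouch (z1,z2) s ltac:(unfold open_dom, s; lra)
           ltac:(apply dinf_lt; lra)
           ltac:(unfold s; replace (t0 - h - t0) with (-h) by ring; rewrite Rabs_Ropp, Rabs_pos_eq; lra)).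
        simpl in A.
        assert (B := Hexp z1 z2 s ltac:(lra) ltac:(lra)
           ltac:(unfold s; replace (t0 - h - t0) with (-h) by ring; rewrite Rabs_Ropp, Rabs_pos_eq; lra)).
        unfold s in B. replace (t0 - h - t0) with (-h) in B by ring.
        rewrite Rabs_Ropp, (Rabs_pos_eq h) in B by lra.
        fold p1 p2 a in B.
        apply Rabs_le_between in B.
        assert (C : eta * (Rabs (z1 - x01) + Rabs (z2 - x02) + h) <= K * eta * h).
        { unfold K. nra. }
        unfold L, c, flin; simpl. unfold s in *. lra. }
      assert (E1 : S 0 t0 f (x01,x02) = S s t0 (S 0 s f) (x01,x02))
        by (apply HSg; [lra | unfold s; lra | exact Hf]).
      assert (E2 : S s t0 (fun y => Rmin (S 0 s f y) (L y)) (x01,x02) <= S s t0 (S 0 s f) (x01,x02)).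
      { apply HMon; try (unfold s; lra); auto. apply GB_min; auto. intro z. apply Rmin_l. }
      assert (E3 : Rabs (S s t0 (fun y => Rmin (S 0 s f y) (L y)) (x01,x02) - S s t0 L (x01,x02)) <= 0).
      { apply (HLoc _ _ s t0 (x01,x02) 0); try (unfold s; lra).
        - apply GB_min; auto.
        - exact GL.
        - intros z Hz. rewrite Rmin_right by (apply HUL; exact Hz).
          rewrite Rminus_eq_0, Rabs_R0; lra.
        - unfold ballinf, dinf. rewrite !Rminus_eq_0, Rabs_R0, Rmax_left; lra. }
      assert (E4 : S s t0 L (x01,x02) = S s t0 (flin (p1,p2)) (x01,x02) + c).
      { apply HTr; try (unfold s; lra). apply GB_flin; simpl; lra. }
      assert (E5 : S s t0 (flin (p1,p2)) (x01,x02) = flin (p1,p2) (x01,x02) + vel (p1,p2) * (t0 - s)).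
      { apply HLin; simpl; unfold s; lra. }
      apply Rabs_le_between in E3.
      unfold s in E5. replace (t0 - (t0 - h)) with h in E5 by ring.
      assert (F : (vel (p1,p2) - K * eta) * h <= a * h) by (unfold c, s in *; lra).
      apply Rmult_le_reg_r in F; lra. }
    destruct (Rle_dec (vel (p1,p2)) a) as [|n]; auto. exfalso.
    assert (M := Main ((vel (p1,p2) - a) / (2 * K)) ltac:(apply Rdiv_lt_0_compat; lra)).
    replace (K * ((vel (p1, p2) - a) / (2 * K))) with ((vel (p1,p2) - a) / 2) in M by (field; lra).
    lra.
Qed.
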